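(* Let $m$ be even and let $G=B(m;R,S,T)$ be a bicirculant with $m/2\notin R\cup T$, and let $G^{=}=B(m;R\cup\{m/2\},S,T\cup\{m/2\})$. Suppose $G^{=}$ is connected. Then either $G$ is connected, or $G$ consists of exactly two connected components, both isomorphic to a connected graph $G_0$; in the latter case $G^{=}$ is isomorphic to the cartesian product $G_0\,\square\,K_2$.
   Context: For an integer $m\ge 1$ and subsets $R,S,T\subseteq\mathbb{Z}_m$ with $R=-R$, $T=-T$, $0\notin R\cup T$, $0\in S$ and $|R|=|T|$, the bicirculant $B(m;R,S,T)$ is the graph with vertex set $\{u_0,\dots,u_{m-1}\}\cup\{v_0,\dots,v_{m-1}\}$ and edge set $\{u_iu_{i+j}: i\in\mathbb{Z}_m, j\in R\}\cup\{v_iv_{i+j}: i\in\mathbb{Z}_m, j\in T\}\cup\{u_iv_{i+j}: i\in\mathbb{Z}_m, j\in S\}$ (indices mod $m$). *)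

(* Defs.v *)
From mathcomp Require Import all_boot all_algebra.
Set Implicit Arguments. Unset Strict Implicit. Unset Printing Implicit Defensive.
Import GRing.Theory.
Local Open Scope ring_scope.

(* A (simple) graph is given by a finite vertex type V and an adjacency
   relation e : rel V (required symmetric and irreflexive where needed). *)

(* Bicirculant B(m;R,S,T): vertices inl i = u_i, inr i = v_i, i in Z_m. *)
Definition bicirc_adj (m : nat) (R S T : {set 'Z_m}) : rel ('Z_m + 'Z_m) :=
  fun x y =>
    match x, y with
    | inl i, inl j => (j - i) \in R
    | inr i, inr j => (j - i) \in T
    | inl i, inr j => (j - i) \in S
    | inr j, inl i => (j - i) \in S
    end.

Definition halfZ (m : nat) : 'Z_m := (m./2)%:R.

Definition symset (m : nat) (X : {set 'Z_m}) : Prop := [set - j | j in X] = X.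

Definition gconnected (V : finType) (e : rel V) : Prop :=
  forall x y, connect e x y.

Definition components (V : finType) (e : rel V) : {set {set V}} :=
  [set [set y | connect e x y] | x : V].

Definition giso (V W : finType) (e : rel V) (f : rel W) : Prop :=
  exists h : V -> W, bijective h /\ forall x y, f (h x) (h y) = e x y.

Definition induced (V : finType) (e : rel V) (C : {set V}) :
  rel {x : V | x \in C} := fun x y => e (val x) (val y).

Definition cartK2 (V : finType) (e : rel V) : rel (V * bool) :=
  fun x y => ((x.2 == y.2) && e x.1 y.1) || ((x.1 == y.1) && (x.2 != y.2)).
Arguments induced {V} e C.

(* Main.v *)
Require Import Defs.
From mathcomp Require Import all_boot all_algebra.
Set Implicit Arguments. Unset Strict Implicit. Unset Printing Implicit Defensive.

Section Gen.
Variables (V : finType) (e f : rel V) (t : V -> V) (x0 : V).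
Hypotheses (esym : symmetric e) (eirr : irreflexive e) (tK : involutive t)
  (te : forall x y, e (t x) (t y) = e x y)
  (fE : forall x y, f x y = e x y || (y == t x))
  (fcon : gconnected f).

Lemma connect_t a b : connect e a b -> connect e (t a) (t b).
Proof.
case/connectP=> p; elim: p a => [|c p IH] a /=; first by move=> _ ->.
case/andP=> eac pc bl; apply: connect_trans (IH c pc bl).
by apply: connect1; rewrite te.
Qed.

Lemma csym a b : connect e a b = connect e b a.
Proof. exact: (sym_connect_sym esym). Qed.

Lemma induced_connect (C : {set V}) (Ccl : forall a b, a \in C -> e a b -> b \in C)
  (a b : {x | x \in C}) : connect e (val a) (val b) -> connect (induced e C) a b.
Proof.
case/connectP=> p; elim: p a => [|c p IH] a /=.
  by move=> _ /val_inj ->.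
case/andP=> eac pc bl.
have cC : c \in C by apply: Ccl eac; exact: (valP a).
apply: connect_trans (IH (Sub c cC) pc bl).
by apply: connect1.
Qed.


Lemma f_step (P : V -> bool) :
  (forall a b, P a -> e a b -> P b) -> (forall a, P a -> P (t a)) ->
  forall a b, P a -> connect f a b -> P b.
Proof.
move=> He Ht a b Pa /connectP [p]; elim: p a Pa => [|c p IH] a Pa /=.
  by move=> _ ->.
case/andP; rewrite fE => /orP [eac|/eqP->] pc bl; apply: IH pc bl.
  exact: He eac.
exact: Ht.
Qed.

Definition C1 := [set y | connect e x0 y].
Definition C2 := [set y | connect e (t x0) y].

Lemma main_gen : gconnected e \/
  (#|components e| = 2%N /\
   exists (V0 : finType) (e0 : rel V0),
     symmetric e0 /\ irreflexive e0 /\ gconnected e0 /\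
     (forall C, C \in components e -> giso (induced e C) e0) /\
     giso f (cartK2 e0)).
Proof.
have ttx0 : t (t x0) = x0 by [].
have [H0|H0] := boolP (connect e x0 (t x0)).
  left.
  have all0 : forall y, connect e x0 y.
    move=> y; apply: (f_step (P := connect e x0)) (fcon x0 y) => //.
      by move=> a b Ha eab; apply: connect_trans Ha (connect1 eab).
    by move=> a Ha; apply: connect_trans H0 (connect_t Ha).
  by move=> x y; apply: (connect_trans (_ : connect e x x0) (all0 y)); rewrite csym.
right.
have inC12 : forall y, (y \in C1) || (y \in C2).
  move=> y; apply: (f_step (P := fun y => (y \in C1) || (y \in C2))) (fcon x0 y).
  - move=> a b; rewrite !inE => /orP [Ha|Ha] eab.
      by rewrite (connect_trans Ha (connect1 eab)).
    by rewrite (connect_trans Ha (connect1 eab)) orbT.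
  - move=> a; rewrite !inE => /orP [Ha|Ha].
      by rewrite (connect_t Ha) orbT.
    by rewrite -{1}ttx0 (connect_t Ha).
  - by rewrite inE connect0.
have disj : forall y, y \in C1 -> y \in C2 -> False.
  move=> y; rewrite !inE => H1 H2; move/negP: H0; apply.
  by apply: connect_trans H1 _; rewrite csym.
have C2t : forall y, (y \in C2) = (t y \in C1).
  move=> y; rewrite !inE; apply/idP/idP => H.
    by rewrite -ttx0; apply: connect_t.
  by rewrite -(tK y); apply: connect_t.
have C1t : forall y, (y \in C1) = (t y \in C2).
  by move=> y; rewrite C2t tK.
have notC1 : forall y, (y \notin C1) = (y \in C2).
  move=> y; apply/idP/idP => H.
    by have := inC12 y; rewrite (negbTE H).
  by apply/negP => H1; apply: disj H1 H.
have C1cl : forall a b, a \in C1 -> e a b -> b \in C1.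
  by move=> a b; rewrite !inE => Ha eab; apply: connect_trans Ha (connect1 eab).
have C2cl : forall a b, a \in C2 -> e a b -> b \in C2.
  by move=> a b; rewrite !inE => Ha eab; apply: connect_trans Ha (connect1 eab).
have compE : components e = [set C1; C2].
  apply/setP => C; rewrite !inE; apply/imsetP/orP.
    case=> x _ ->; have := inC12 x; rewrite !inE => /orP [Hx|Hx]; [left|right];
      apply/eqP/setP => y; rewrite !inE; apply/idP/idP => H.
    - by apply: connect_trans Hx H.
    - by apply: connect_trans H; rewrite csym.
    - by apply: connect_trans Hx H.
    - by apply: connect_trans H; rewrite csym.
  by case=> /eqP ->; [exists x0|exists (t x0)].
split.
  rewrite compE cards2; suff -> : (C1 != C2) = true by []; apply/eqP => E.
  have : t x0 \in C2 by rewrite inE connect0.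
  by rewrite -E inE (negbTE H0).
have x0C1 : x0 \in C1 by rewrite inE connect0.
have tx0C2 : t x0 \in C2 by rewrite inE connect0.
pose V0 := {x | x \in C1}.
pose z0 : V0 := Sub x0 x0C1.
pose y0 : {x | x \in C2} := Sub (t x0) tx0C2.
have insE : forall a b, a \in C1 -> b \in C1 ->
    (insubd z0 a == insubd z0 b) = (a == b).
  by move=> a b Ha Hb; rewrite -val_eqE !insubdK.
have valC1 : forall a : V0, val a \in C1 by move=> a; exact: (valP a).
have valC2 : forall a : {x | x \in C2}, val a \in C2 by move=> a; exact: (valP a).
exists V0, (induced e C1).
split; first by move=> a b; exact: esym.
split; first by move=> a; exact: eirr.
split.
  move=> a b; apply: induced_connect => //.
  have := valC1 a; have := valC1 b; rewrite !inE => Hb Ha.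
  by apply: connect_trans Hb; rewrite csym.
split.
  move=> C; rewrite compE !inE => /orP [/eqP->|/eqP->].
    by exists id; split; [exists id|].
  have tin : forall a : {x | x \in C2}, t (val a) \in C1.
    by move=> a; rewrite -C2t.
  have tin2 : forall a : V0, t (val a) \in C2.
    by move=> a; rewrite -C1t.
  exists (fun a => insubd z0 (t (val a))); split.
    exists (fun b => insubd y0 (t (val b))) => a; apply: val_inj.
      by rewrite (insubdK _ (tin a)) insubdK ?tK // -[val a]tK -C1t.
    by rewrite (insubdK _ (tin2 a)) insubdK ?tK // -[val a]tK -C2t.
  by move=> a b; rewrite /induced (insubdK _ (tin a)) (insubdK _ (tin b)) te.
pose h x := if x \in C1 then (insubd z0 x, false) else (insubd z0 (t x), true).
pose g (p : V0 * bool) := if p.2 then t (val p.1) else val p.1.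
exists h; split.
  exists g.
    move=> x; rewrite /h /g; case: (boolP (x \in C1)) => Hx /=.
      exact: (insubdK z0 Hx).
    have Ht : t x \in C1 by rewrite -C2t -notC1.
    by rewrite (insubdK z0 Ht) tK.
  move=> [a b]; case: b; rewrite /g /h /=.
    have : t (val a) \notin C1 by rewrite notC1 -C1t.
    move/negbTE ->; congr pair; rewrite tK; apply: val_inj; exact: (insubdK z0 (valC1 a)).
  by rewrite valC1; congr pair; apply: val_inj; exact: (insubdK z0 (valC1 a)).
move=> x y; rewrite fE /cartK2 /h.
case: (boolP (x \in C1)) => Hx; case: (boolP (y \in C1)) => Hy /=.
- rewrite andbF orbF /induced (insubdK z0 Hx) (insubdK z0 Hy).
  suff /negbTE -> : y != t x by rewrite orbF.
  by apply/eqP => E; apply: (disj y Hy); rewrite E -C1t.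
- have Ht : t y \in C1 by rewrite -C2t -notC1.
  rewrite andbT insE //.
  have /negbTE -> : ~~ e x y by apply/negP => exy; move/negP: Hy; apply; exact: C1cl exy.
  by apply/eqP/eqP => ->; rewrite tK.
- have Ht : t x \in C1 by rewrite -C2t -notC1.
  rewrite andbT insE // eq_sym.
  by have /negbTE -> : ~~ e x y by apply/negP => exy; move/negP: Hx; apply; apply: C1cl Hy _; rewrite esym.
- have Htx : t x \in C1 by rewrite -C2t -notC1.
  have Hty : t y \in C1 by rewrite -C2t -notC1.
  rewrite andbF orbF /induced (insubdK z0 Htx) (insubdK z0 Hty) te.
  suff /negbTE -> : y != t x by rewrite orbF.
  by apply/eqP => E; move/negP: Hy; apply; rewrite E.
Qed.

End Gen.
Unset Implicit Arguments.
Import GRing.Theory.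
Local Open Scope ring_scope.

Lemma half_double (m : nat) : (1 < m)%N -> ~~ odd m -> halfZ m + halfZ m = 0 :> 'Z_m.
Proof.
move=> m1 ev; rewrite /halfZ -natrD.
have -> : (m./2 + m./2 = m)%N by rewrite addnn -{2}(odd_double_half m) (negbTE ev).
exact: pchar_Zp.
Qed.

Lemma half_neq0 (m : nat) : (1 < m)%N -> ~~ odd m -> halfZ m != 0 :> 'Z_m.
Proof.
case: m => [|[|m]] // _ ev; rewrite /halfZ Zp_nat.
apply/eqP => /(congr1 val) /=.
rewrite /Zp_trunc /= modn_small //.
by rewrite ltnS ltnS leq_half_double -addnn -addnS leq_addr.
Qed.

Definition tZ (m : nat) (x : 'Z_m + 'Z_m) : 'Z_m + 'Z_m :=
  match x with inl i => inl (i + halfZ m) | inr i => inr (i + halfZ m) end.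

Theorem lemma2p8 (m : nat) (R S T : {set 'Z_m}) :
  (0 < m)%N -> ~~ odd m ->
  symset R -> symset T -> 0 \notin R -> 0 \notin T -> 0 \in S ->
  #|R| = #|T| ->
  halfZ m \notin R -> halfZ m \notin T ->
  gconnected (bicirc_adj (R :|: [set halfZ m]) S (T :|: [set halfZ m])) ->
  gconnected (bicirc_adj R S T) \/
  (#|components (bicirc_adj R S T)| = 2%N /\
   exists (V0 : finType) (e0 : rel V0),
     symmetric e0 /\ irreflexive e0 /\ gconnected e0 /\
     (forall C, C \in components (bicirc_adj R S T) ->
        giso (induced (bicirc_adj R S T) C) e0) /\
     giso (bicirc_adj (R :|: [set halfZ m]) S (T :|: [set halfZ m])) (cartK2 e0)).
Proof.
move=> m0 ev HR HT R0 T0 S0 _ hR hT con.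
have m1 : (1 < m)%N by move: m0 ev; case: (m) => [|[|]].
have oppX : forall X : {set 'Z_m}, symset X -> forall a : 'Z_m, (- a \in X) = (a \in X).
  by move=> X HX a; rewrite -{1}HX mem_imset //; exact: oppr_inj.
apply: (@main_gen _ _ _ (tZ m) (inl 0)) => //.
- move=> [i|i] [j|j] //=.
    by rewrite -[i - j]opprB (oppX _ HR).
  by rewrite -[i - j]opprB (oppX _ HT).
- move=> [i|i] /=; rewrite subrr; exact: negbTE.
- by move=> [i|i] /=; rewrite -addrA half_double // addr0.
- by move=> [i|i] [j|j] /=; rewrite opprD addrACA subrr addr0.
- move=> [i|i] [j|j] /=; rewrite ?in_setU ?in_set1 ?subr_eq ?orbF //;
  by rewrite [halfZ m + i]addrC; congr orb; apply/eqP/eqP => [->|[->]].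
Qed.
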